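(* Let $p\ge1$, let $W$ be a bounded graphon over a probability space $(\Omega,\mathcal F,\pi)$, and let $W'$ be a graphon over $(\Omega,\mathcal F,\pi)$ which is a block model with $N$ classes (i.e., $W'=\sum_{i,j=1}^N\beta_{ij}1_{Y_i\times Y_j}$ for a measurable partition $Y_1,\dots,Y_N$ of $\Omega$) and satisfies $\|W-W'\|_p\le\varepsilon$. Then $\varepsilon^{(p)}_{\ge\kappa}(W)\le2\varepsilon$ whenever $\kappa\le\frac1{2N}\big(\frac{\varepsilon}{\|W'\|_\infty}\big)^p$.
   Context: A graphon over $(\Omega,\mathcal F,\pi)$ is a measurable symmetric $W:\Omega\times\Omega\to[0,\infty)$ with $\|W\|_1<\infty$, $\|W\|_p^p=\int|W|^p\,d\pi\,d\pi$. A block model $(\mathbf p,B)$ is the graphon on $[k]$ with measure $\mathbf p$ and $W(i,j)=B_{ij}$. $\delta_p(W,W')=\inf_\nu(\int|W(x,y)-W'(x',y')|^pd\nu(x,x')d\nu(y,y'))^{1/p}$ over couplings $\nu$ of the underlying measures. $\varepsilon^{(p)}_{\ge\kappa}(W)=\inf\{\delta_p(W,W'):W'=(\mathbf p,B)\text{ block model},\min_ip_i\ge\kappa\}$. *)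

(* Defs.v *)
From HB Require Import structures.
From mathcomp Require Import all_boot all_order all_algebra.
From mathcomp Require Import all_classical all_reals all_analysis ess_sup_inf.
Set Implicit Arguments. Unset Strict Implicit. Unset Printing Implicit Defensive.
Import Order.TTheory GRing.Theory Num.Theory.
Local Open Scope classical_set_scope.
Local Open Scope ring_scope.

(* Index set [k] of a block model with k.+1 classes (a block model on a
   probability measure has at least one class), with the discrete sigma-algebra. *)
Definition bidx (k : nat) : Type := 'I_k.+1.
HB.instance Definition _ k := Finite.on (bidx k).
HB.instance Definition _ k := isPointed.Build (bidx k) ord0.
HB.instance Definition _ k := @isMeasurable.Build default_measure_display
  (bidx k) discrete_measurable discrete_measurable0
  discrete_measurableC discrete_measurableU.

Section Graphons.
Context {R : realType} {d : measure_display} {T : measurableType d}.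
Local Open Scope ereal_scope.

Definition is_graphon (pi : probability T R) (W : T -> T -> R) : Prop :=
  [/\ measurable_fun setT (fun z : T * T => W z.1 z.2),
      (forall x y, W x y = W y x),
      (forall x y, (0 <= W x y)%R) &
      \int[pi \x pi]_z (W z.1 z.2)%:E < +oo].

Definition Lp_norm (pi : probability T R) (p : R) (W : T -> T -> R) : \bar R :=
  (\int[pi \x pi]_z (`|W z.1 z.2| `^ p)%:E) `^ p^-1.

Definition Linf_norm (pi : probability T R) (W : T -> T -> R) : \bar R :=
  ess_sup (pi \x pi) (fun z => (`|W z.1 z.2|)%:E).

Definition is_coupling (pi : probability T R) (k : nat) (pw : bidx k -> R)
    (nu : probability (T * bidx k)%type R) : Prop :=
  (forall A, measurable A -> nu (A `*` setT) = pi A) /\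
  (forall i : bidx k, nu (setT `*` [set i]) = (pw i)%:E).

Definition delta_p_block (pi : probability T R) (p : R) (W : T -> T -> R)
    (k : nat) (pw : bidx k -> R) (B : bidx k -> bidx k -> R) : \bar R :=
  ereal_inf [set (\int[nu \x nu]_z
                    (`|W z.1.1 z.2.1 - B z.1.2 z.2.2| `^ p)%:E) `^ p^-1
            | nu in [set nu | is_coupling pi pw nu]].

Definition is_block_model (k : nat) (pw : bidx k -> R)
    (B : bidx k -> bidx k -> R) : Prop :=
  (forall i, (0 <= pw i)%R) /\ (forall i j, B i j = B j i) /\
  (forall i j, (0 <= B i j)%R).

Definition eps_ge (pi : probability T R) (p kappa : R) (W : T -> T -> R)
    : \bar R :=
  ereal_inf [set e | exists (k : nat) (pw : bidx k -> R)
                            (B : bidx k -> bidx k -> R),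
      [/\ is_block_model pw B, (forall i, (kappa <= pw i)%R) &
          e = delta_p_block pi p W pw B]].

End Graphons.

(* Main.v *)
Require Import Defs.
From HB Require Import structures.
From mathcomp Require Import all_boot all_order all_algebra.
From mathcomp Require Import all_classical all_reals all_analysis ess_sup_inf.
From mathcomp Require Import measurable_realfun.
From mathcomp.algebra_tactics Require Import ring lra.
Import Order.TTheory GRing.Theory Num.Theory.
Local Open Scope classical_set_scope.
Local Open Scope ring_scope.

Section S.
Context {R : realType} {d : measure_display} {T : measurableType d}.
Local Open Scope ereal_scope.

Lemma mcomp_powR d' (U : measurableType d') (f : U -> R) p :
  measurable_fun [set: U] f -> measurable_fun setT (fun x => f x `^ p)%R.
Proof. exact: (@measurableT_comp _ _ _ _ _ _ (@powR R ^~ p)). Qed.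

Lemma Lp_normE (pi : probability T R) p (F : T -> T -> R) :
  Lp_norm pi p F = Lnorm (pi \x pi) p%:E (EFin \o (fun z => F z.1 z.2)).
Proof.
rewrite unlock /Lp_norm /=; congr (_ `^ _); apply: eq_integral => z _ //.
Qed.

Lemma meas_bidx d' (U : measurableType d') k (c : U -> bidx k) :
  (forall i, measurable (c @^-1` [set i])) -> measurable_fun setT c.
Proof.
move=> mc _ A _; rewrite setTI.
have -> : c @^-1` A = \bigcup_(i in A) c @^-1` [set i].
  by apply/seteqP; split => [x Ax|x [i Ai /= ->]]//; exists (c x).
by apply: fin_bigcup_measurable => //; exact: finite_finset.
Qed.

Lemma meas_h2 d' (U : measurableType d') k (c1 c2 : U -> bidx k)
   (h : bidx k -> bidx k -> R) :
  measurable_fun setT c1 -> measurable_fun setT c2 ->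
  measurable_fun setT (fun u => h (c1 u) (c2 u)).
Proof.
move=> m1 m2 _ A _; rewrite setTI.
have -> : (fun u => h (c1 u) (c2 u)) @^-1` A =
   \bigcup_(a in [set: bidx k]) \bigcup_(b in [set b : bidx k | A (h a b)])
      (c1 @^-1` [set a] `&` c2 @^-1` [set b]).
  apply/seteqP; split => [x Ax|x [a _ [b /= Ab [/= -> ->]]]]//.
  by exists (c1 x) => //; exists (c2 x).
apply: fin_bigcup_measurable; first exact: finite_finset.
move=> a _; apply: fin_bigcup_measurable; first exact: finite_finset.
move=> b _; apply: measurableI.
  by rewrite -[X in measurable X]setTI; apply: m1.
by rewrite -[X in measurable X]setTI; apply: m2.
Qed.


Lemma coupling_bound (pi : probability T R) (p : R) (W : T -> T -> R) k
    (c : T -> bidx k) (B : bidx k -> bidx k -> R) :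
  (0 < p)%R -> measurable_fun setT (fun z : T * T => W z.1 z.2) ->
  measurable_fun setT c ->
  delta_p_block pi p W (fun i => fine (pi (c @^-1` [set i]))) B <=
  Lp_norm pi p (fun x y => W x y - B (c x) (c y))%R.
Proof.
move=> p0 mW mc.
have mphi : measurable_fun setT (fun x => (x, c x)).
  exact: measurable_fun_pair.
pose X : {mfun T >-> (T * bidx k)%type} :=
  HB.pack (fun x => (x, c x)) (isMeasurableFun.Build _ _ _ _ _ mphi).
pose nu := distribution pi X.
apply: (@le_trans _ _ ((\int[nu \x nu]_z
   (`|W z.1.1 z.2.1 - B z.1.2 z.2.2| `^ p)%:E) `^ p^-1)).
  apply: ereal_inf_lbound; exists nu => //.
  split.
    move=> A mA; rewrite /nu /distribution /pushforward; congr (pi _).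
    by apply/seteqP; split => [x [] //|x Ax]; split.
  move=> i; rewrite /nu /distribution /pushforward fineK; last first.
    by apply: fin_num_measure; rewrite -[X in measurable X]setTI; apply: mc.
  by congr (pi _); apply/seteqP; split => [x [] //|x Ax]; split.
pose f := fun u : (T * bidx k) * (T * bidx k) =>
  (`|W u.1.1 u.2.1 - B u.1.2 u.2.2| `^ p)%:E.
have f0 : forall u, 0 <= f u by move=> u; rewrite lee_fin powR_ge0.
have mf : measurable_fun [set: (T * bidx k) * (T * bidx k)] f.
  apply/measurable_EFinP; apply: mcomp_powR.
  apply: measurableT_comp => //; apply: measurable_funB.
    exact: (measurableT_comp mW (measurable_fun_pair
      (measurableT_comp measurable_fst measurable_fst)
      (measurableT_comp measurable_fst measurable_snd))).
  apply: meas_h2.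
    exact: (measurableT_comp measurable_snd measurable_fst).
  exact: (measurableT_comp measurable_snd measurable_snd).
pose g := fun z : T * T => f ((z.1, c z.1), (z.2, c z.2)).
have mg : measurable_fun setT g.
  apply: (measurableT_comp mf); apply: measurable_fun_pair.
    exact: (measurableT_comp mphi measurable_fst).
  exact: (measurableT_comp mphi measurable_snd).
have g0 : forall z, 0 <= g z by move=> z; exact: f0.
rewrite /Lp_norm le_eqVlt; apply/orP; left; apply/eqP; congr (_ `^ _).
rewrite (fubini_tonelli1 _ mf f0) (fubini_tonelli1 _ mg g0).
rewrite /fubini_F.
rewrite ge0_integral_distribution //; last 2 first.
- exact: (measurable_fun_fubini_tonelli_F (m2 := nu) _ mf f0).
- move=> u; apply: integral_ge0 => v _; exact: f0.
apply: eq_integral => x _ /=.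
rewrite ge0_integral_distribution //.
apply: (measurableT_comp mf); exact: measurable_fun_pair.
Qed.

Lemma in_bigsetU (n : nat) (P : pred 'I_n) (F : 'I_n -> set T) x :
  (\big[setU/set0]_(i < n | P i) F i) x <-> exists i, P i /\ F i x.
Proof.
split.
  apply: (big_rec (fun S : set T => S x -> exists i, P i /\ F i x)) => //.
  by move=> i S Pi IH [Fix|Sx]; [exists i|exact: IH].
by move=> [i [Pi Fix]]; rewrite (bigD1 i) //=; left.
Qed.

Lemma le_sum1 (I : finType) (F : I -> R) i :
  (forall j, (0 <= F j)%R) -> (F i <= \sum_j F j)%R.
Proof.
by move=> F0; rewrite (bigD1 i) //= lerDl sumr_ge0.
Qed.

Lemma ess_lb (pi : probability T R) (F : T -> T -> R) (A B : set T) v :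
  measurable A -> measurable B -> 0 < pi A -> 0 < pi B ->
  (forall x y, A x -> B y -> F x y = v) ->
  `|v|%:E <= Linf_norm pi F.
Proof.
move=> mA mB pA pB FAB; rewrite /Linf_norm.
rewrite leNgt; apply/negP => hlt.
have [N0 [mN0 N00 sub]] := ess_sup_ge (pi \x pi) (fun z => `|F z.1 z.2|%:E).
have : ((pi \x pi) (A `*` B) <= (pi \x pi) N0).
  apply: le_measure; rewrite ?inE //; first exact: measurableX.
  move=> [x y] [/= Ax By]; apply: sub => /=.
  by rewrite FAB //; apply/negP; rewrite -ltNge.
by rewrite N00 product_measure1E // leNgt mule_gt0.
Qed.

End S.

Theorem lemma6p2 (R : realType) (d : measure_display) (T : measurableType d)
    (pi : probability T R) (p : R) (W W' : T -> T -> R) (N : nat)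
    (Y : 'I_N -> set T) (beta : 'I_N -> 'I_N -> R) (eps kappa : R) :
  1 <= p ->
  is_graphon pi W ->
  (Linf_norm pi W < +oo)%E ->
  is_graphon pi W' ->
  (forall i, measurable (Y i)) ->
  trivIset setT Y ->
  \bigcup_i Y i = setT ->
  (forall x y, W' x y = \sum_(i < N) \sum_(j < N)
                          beta i j * \1_(Y i) x * \1_(Y j) y) ->
  (Lp_norm pi p (fun x y => (W x y - W' x y)%R) <= eps%:E)%E ->
  kappa <= 1 ->
  ((kappa * (2 * N%:R))%:E * (Linf_norm pi W' `^ p) <= (eps `^ p)%:E)%E ->
  (eps_ge pi p kappa W <= (2 * eps)%:E)%E.
Proof.
move=> p1 [mW symW W0 _] _ [mW' symW' W'0 _] mY tY cY W'E hLp k1 hk.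
have p0 : 0 < p by exact: (lt_le_trans ltr01 p1).
have N0 : (0 < N)%N.
  rewrite lt0n; apply/negP => /eqP N0; subst N.
  have : [set: T] = set0.
    rewrite -cY; apply/seteqP; split => [x [i]|//]; by case: i.
  move=> h; have := probability_setT pi; rewrite h measure0.
  by move=> [] /esym/eqP; rewrite oner_eq0.
pose i0 : 'I_N := Ordinal N0.
pose ix x := xget i0 [set i | Y i x].
have ixP x : Y (ix x) x.
  have [i _ Yix] : (\bigcup_i Y i) x by rewrite cY.
  exact: (@xgetPex _ i0 [set i | Y i x] (ex_intro _ i Yix)).
have ixU x i : Y i x -> i = ix x.
  by move=> Yix; apply: tY => //; exists x; split => //; exact: ixP.
have sumE (F : 'I_N -> R) x : \sum_(i < N) F i * \1_(Y i) x = F (ix x).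
  rewrite (bigD1 (ix x)) //= big1 ?addr0.
    by rewrite indicE mem_set ?mulr1 //; exact: ixP.
  move=> i /negPf ine; rewrite indicE memNset ?mulr0 //.
  by move=> /ixU ie; rewrite ie eqxx in ine.
have W'E2 x y : W' x y = beta (ix x) (ix y).
  rewrite W'E.
  under eq_bigr => i _ do rewrite (sumE (fun j => beta i j * \1_(Y i) x)).
  by rewrite (sumE (fun i => beta i (ix y))).
have betaS a b : (exists x, Y a x) -> (exists y, Y b y) ->
    beta a b = beta b a /\ 0 <= beta a b.
  move=> [x Yax] [y Yby].
  have xa := ixU _ _ Yax; have yb := ixU _ _ Yby.
  by rewrite xa yb -!W'E2 symW'.
have posne a : (0 < pi (Y a))%E -> exists x, Y a x.
  move=> pa; apply: contrapT => ne.
  have Y0 : Y a = set0 by apply/seteqP; split => x // Yx; apply: ne; exists x.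
  by move: pa; rewrite Y0 measure0 ltxx.
pose bnd := \sum_i \sum_j `|beta i j|.
have Mle : (Linf_norm pi W' <= bnd%:E)%E.
  apply/ess_supP; apply: aeW => z /=; rewrite lee_fin W'E2.
  rewrite /bnd.
  apply: le_trans (le_sum1 _ (fun j => `|beta (ix z.1) j|) (ix z.2)
     (fun j => normr_ge0 _)) _.
  exact: (le_sum1 _ (fun i => \sum_j `|beta i j|) (ix z.1)
     (fun i => sumr_ge0 _ (fun j _ => normr_ge0 _))).
have M0 : (0 <= Linf_norm pi W')%E.
  apply: ess_sup_gee.
    by rewrite [X in (0 < X)%E](probability_setT (pi \x pi)%E) lte01.
  by apply: aeW => z; rewrite lee_fin.
pose M' := fine (Linf_norm pi W').
have ME : Linf_norm pi W' = M'%:E.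
  by rewrite fineK // ge0_fin_numE // (le_lt_trans Mle) // ltey.
have M'0 : 0 <= M' by rewrite -lee_fin -ME.
pose py i := fine (pi (Y i)).
have pyE i : pi (Y i) = (py i)%:E by rewrite fineK // fin_num_measure.
have py0 i : 0 <= py i by rewrite -lee_fin -pyE measure_ge0.
pose L i := (0 < py i) && (kappa <= py i).
pose S := \big[setU/set0]_(i < N | ~~ L i) Y i.
have mS : measurable S by apply: bigsetU_measurable => i _; exact: mY.
have memS x : ~~ L (ix x) -> S x.
  by move=> nL; apply/in_bigsetU; exists (ix x); split => //; exact: ixP.
have piS : (pi S <= (N%:R * Num.max kappa 0)%:E)%E.
  rewrite measure_bigsetU_ord_cond //; last first.
    by apply: (sub_trivIset _ tY).
  rewrite (eq_bigr (fun i => (py i)%:E)); last first.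
    by move=> i _; rewrite /py fineK // fin_num_measure.
  rewrite sumEFin lee_fin big_mkcond /=.
  rewrite mulr_natl -[in X in _ <= X](card_ord N) -sumr_const.
  apply: ler_sum => i _; case: ifPn => Li; last by rewrite le_max lexx orbT.
  rewrite /L negb_and -leNgt -ltNge in Li.
  case/orP: Li => h; first by rewrite le_max h orbT.
  by rewrite le_max (ltW h).
pose E := (S `*` [set: T]) `|` ([set: T] `*` S).
have mE : measurable E by apply: measurableU; apply: measurableX.
have muE : ((pi \x pi)%E E <= (2 * (N%:R * Num.max kappa 0))%:E)%E.
  apply: le_trans (measureU2 _ _ _) _; try exact: measurableX.
  change ((pi \x pi)%E (S `*` [set: T]) + (pi \x pi)%E ([set: T] `*` S) <=
    (2 * (N%:R * Num.max kappa 0))%:E)%E.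
  rewrite !product_measure1E //.
  change (pi S * pi [set: T] + pi [set: T] * pi S <=
    (2 * (N%:R * Num.max kappa 0))%:E)%E.
  rewrite probability_setT mule1 mul1e.
  by rewrite mulr_natl mulr2n EFinD leeD.
have eps0 : 0 <= eps.
  by rewrite -lee_fin (le_trans _ hLp) // /Lp_norm poweR_ge0.
have final : forall k (c : T -> bidx k) (B : bidx k -> bidx k -> R),
    measurable_fun setT c -> (forall i j, B i j = B j i) ->
    (forall i j, 0 <= B i j <= M') ->
    (forall i, kappa <= fine (pi (c @^-1` [set i]))) ->
    (forall x y, L (ix x) -> L (ix y) -> B (c x) (c y) = W' x y) ->
    (eps_ge pi p kappa W <= (2 * eps)%:E)%E.
  move=> k c B mc Bs Bb pwk BW.
  pose W'' := fun x y => B (c x) (c y).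
  have mW'' : measurable_fun setT (fun z : T * T => W'' z.1 z.2).
    apply: meas_h2.
      exact: (measurableT_comp mc measurable_fst).
    exact: (measurableT_comp mc measurable_snd).
  have step1 : (eps_ge pi p kappa W <=
      delta_p_block pi p W (fun i => fine (pi (c @^-1` [set i]))) B)%E.
    apply: ereal_inf_lbound; exists k, (fun i => fine (pi (c @^-1` [set i]))), B.
    split => //; split; first by move=> i; apply: fine_ge0; exact: measure_ge0.
    by split => // i j; case/andP: (Bb i j).
  apply: le_trans step1 _.
  apply: le_trans (coupling_bound pi p W k c B p0 mW mc) _.
  pose f := fun z : T * T => W z.1 z.2 - W' z.1 z.2.
  pose g := fun z : T * T => W' z.1 z.2 - W'' z.1 z.2.
  have mf : measurable_fun setT f by apply: measurable_funB.
  have mg : measurable_fun setT g by apply: measurable_funB.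
  have step3 : (Lp_norm pi p (fun x y => (W x y - B (c x) (c y))%R) <=
      Lp_norm pi p (fun x y => (W x y - W' x y)%R) +
      Lp_norm pi p (fun x y => (W' x y - W'' x y)%R))%E.
    rewrite !Lp_normE.
    have -> : (EFin \o (fun z => W z.1 z.2 - B (c z.1) (c z.2))) =
              EFin \o (f \+ g)%R.
      by apply: funext => z; rewrite /= /f /g addrA subrK.
    exact: minkowski_EFin.
  apply: le_trans step3 _.
  have -> : (2 * eps) = eps + eps by rewrite mulr_natl mulr2n.
  rewrite EFinD; apply: leeD => //.
  have hI : (\int[(pi \x pi)%E]_z (`|W' z.1 z.2 - W'' z.1 z.2| `^ p)%:E
             <= (eps `^ p)%:E)%E.
    pose h := fun z : T * T => ((M' `^ p)%:E * (\1_E z)%:E)%E.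
    apply: (@le_trans _ _ (\int[(pi \x pi)%E]_z h z)%E).
      apply: ae_ge0_le_integral.
      - exact: measurableT.
      - by move=> z Dz; rewrite lee_fin powR_ge0.
      - apply/measurable_EFinP; apply: mcomp_powR.
        apply: measurableT_comp => //; exact: measurable_funB.
      - by move=> z Dz; rewrite /h mule_ge0 // lee_fin ?powR_ge0 // indicE ler0n.
      - apply: measurable_funeM; apply/measurable_EFinP.
        exact: measurable_indic.
      apply: filterS (ess_sup_ge (pi \x pi)%E (fun z => `|W' z.1 z.2|%:E)).
      move=> z hz Dz.
      have hz' : `|W' z.1 z.2| <= M' by rewrite -lee_fin -ME; exact: hz.
      rewrite /h; case: (boolP (z \in E)) => zE.
        rewrite indicE zE mule1 lee_fin.
        apply: ge0_ler_powR; rewrite ?nnegrE ?normr_ge0 ?(ltW p0) //.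
        have := Bb (c z.1) (c z.2); move=> /andP[Bz0 BzM].
        have w0 := W'0 z.1 z.2; rewrite ger0_norm // in hz'.
        rewrite ler_norml /W''; apply/andP; split; lra.
      rewrite indicE (negbTE zE) mule0.
      have [L1 L2] : L (ix z.1) /\ L (ix z.2).
        split; apply: contraNT zE => nL; apply/mem_set.
          by left; split => //; exact: memS.
        by right; split => //; exact: memS.
      by rewrite /W'' BW // subrr normr0 powR0 ?gt_eqF.
    rewrite /h ge0_integralZl //; last 2 first.
    - by apply/measurable_EFinP; exact: measurable_indic.
    - by rewrite lee_fin powR_ge0.
    rewrite integral_indic // setIT.
    apply: le_trans (lee_wpmul2l _ muE) _; first by rewrite lee_fin powR_ge0.
    rewrite -EFinM lee_fin.
    case: (leP kappa 0) => hk0.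
      by rewrite !mulr0 powR_ge0.
    rewrite ME poweR_EFin -EFinM lee_fin in hk.
    apply: le_trans hk; rewrite le_eqVlt; apply/orP; left; apply/eqP; ring.
  rewrite /Lp_norm.
  have := gt0_ler_poweR (r := p^-1) _ _ _ hI.
  rewrite poweR_EFin -powRrM mulfV ?gt_eqF // powRr1 //; apply.
  - by rewrite invr_ge0 ltW.
  - by rewrite in_itv /= leey andbT; apply: integral_ge0 => z _;
      rewrite lee_fin powR_ge0.
  - by rewrite in_itv /= lee_fin powR_ge0 leey.
case: (pselect (exists i, L i)) => [[i1 Li1]|noL]; last first.
  apply: (final 0 (fun _ => ord0) (fun _ _ => 0)).
  - exact: measurable_cst.
  - by [].
  - by move=> i j; rewrite lexx M'0.
  - move=> i; have -> : (fun _ : T => (ord0 : bidx 0)) @^-1` [set i] = setT.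
      by apply/seteqP; split => x // _; rewrite /= (ord1 i).
    by rewrite probability_setT.
  - by move=> x y Lx; exfalso; apply: noL; exists (ix x).
pose s := [seq i <- enum 'I_N | L i].
have s_uniq : uniq s by rewrite filter_uniq // enum_uniq.
have memsL i : (i \in s) = L i by rewrite mem_filter mem_enum andbT.
pose r i := if L i then i else i1.
have rs i : r i \in s by rewrite /r memsL; case: ifP.
have szs : (0 < size s)%N.
  rewrite lt0n size_eq0; apply/negP => /eqP s0; move: (rs i1).
  by rewrite s0.
pose k := (size s).-1.
have ks : k.+1 = size s by rewrite prednK.
pose c x : bidx k := inord (index (r (ix x)) s).
pose B (a b : bidx k) := beta (nth i1 s a) (nth i1 s b).
have nthL (a : bidx k) : L (nth i1 s a).
  by rewrite -memsL mem_nth // -ks ltn_ord.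
have cE x : nth i1 s (c x) = r (ix x).
  by rewrite /c inordK ?nth_index // ks index_mem.
have posL a : L a -> (0 < pi (Y a))%E by move=> /andP[h _]; rewrite pyE lte_fin.
have Bsb a b : B a b = B b a /\ 0 <= B a b.
  exact: (betaS _ _ (posne _ (posL _ (nthL a))) (posne _ (posL _ (nthL b)))).
have mc : measurable_fun setT c.
  apply: meas_bidx => a.
  have -> : c @^-1` [set a] =
      \bigcup_(i in [set i | inord (index (r i) s) = a]) Y i.
    apply/seteqP; split => [x /= cx|x [i /= ia Yx]].
      by exists (ix x) => //; exact: ixP.
    by rewrite /c -(ixU _ _ Yx).
  apply: fin_bigcup_measurable; first exact: finite_finset.
  by move=> i _; exact: mY.
apply: (final k c B mc).
- by move=> a b; case: (Bsb a b).
- move=> a b; apply/andP; split; first by case: (Bsb a b).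
  apply: le_trans (ler_norm _) _; rewrite -lee_fin -ME.
  apply: (ess_lb pi W' (Y (nth i1 s a)) (Y (nth i1 s b))) => //.
  + exact: posL.
  + exact: posL.
  + move=> x y Yx Yy; rewrite W'E2 -(ixU _ _ Yx) -(ixU _ _ Yy) //.
- move=> a.
  have mca : measurable (c @^-1` [set a]).
    by rewrite -[X in measurable X]setTI; exact: mc.
  rewrite -lee_fin fineK; last exact: fin_num_measure.
  apply: (@le_trans _ _ (pi (Y (nth i1 s a)))).
    by rewrite pyE lee_fin; case/andP: (nthL a).
  apply: le_measure; rewrite ?inE //.
  move=> x Yx; rewrite /= /c -(ixU _ _ Yx) /r (nthL a) index_uniq //.
    exact: inord_val.
  by rewrite -ks ltn_ord.
- by move=> x y Lx Ly; rewrite /B !cE /r Lx Ly W'E2.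
Qed.
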